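(* Let $\lambda\ge\kappa$ be uncountable cardinals and $p\in(1,\infty)$. Let $(x_\alpha)_{\alpha<\kappa}$ be a normalised transfinite sequence in $\ell_p(\lambda)$ equivalent to the standard unit vector basis of $\ell_p(\kappa)$. If $T\in\mathscr{B}(\ell_p(\lambda))$ satisfies $\inf\{\|Tx_\alpha\|:\alpha<\kappa\}>0$, then $T\notin\mathscr{S}_{\ell_p(\kappa)}(\ell_p(\lambda))$.
   Context: $(x_\alpha)$ is equivalent to the unit vector basis $(e_\alpha)$ of $\ell_p(\kappa)$ if $e_\alpha\mapsto x_\alpha$ extends to an isomorphism of $\ell_p(\kappa)$ onto $\overline{\operatorname{span}}\{x_\alpha\}$. For Banach spaces $X,Z$, $\mathscr{S}_Z(X)$ is the set of $T\in\mathscr{B}(X)$ such that there is no closed subspace $W\subseteq X$ isomorphic to $Z$ with $T|_W$ bounded below. *)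

(* Defs.v *)
From HB Require Import structures.
From mathcomp Require Import all_boot all_order all_algebra.
From mathcomp Require Import all_classical all_reals all_analysis.
Set Implicit Arguments. Unset Strict Implicit. Unset Printing Implicit Defensive.
Import Order.TTheory GRing.Theory Num.Theory.
Local Open Scope classical_set_scope.
Local Open Scope ring_scope.

Section Lp.
Variable R : realType.

Definition lp_sum (I : choiceType) (p : R) (f : I -> R) : \bar R :=
  \esum_(i in [set: I]) (`|f i| `^ p)%:E.

Definition in_lp (I : choiceType) (p : R) (f : I -> R) : Prop :=
  (lp_sum p f < +oo)%E.

Definition lp_norm (I : choiceType) (p : R) (f : I -> R) : R :=
  (fine (lp_sum p f)) `^ p^-1.

Definition unit_vec (I : choiceType) (a : I) : I -> R := fun i => (i == a)%:R.

Definition lp_linear (I J : choiceType) (p : R) (T : (I -> R) -> (J -> R)) :=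
  forall (f g : I -> R) (a : R), in_lp p f -> in_lp p g ->
    T (fun i => a * f i + g i) = (fun j => a * T f j + T g j).

Definition bounded_op (I J : choiceType) (p : R) (T : (I -> R) -> (J -> R)) :=
  [/\ lp_linear p T,
      (forall f, in_lp p f -> in_lp p (T f)) &
      exists C : R, 0 <= C /\ forall f, in_lp p f -> lp_norm p (T f) <= C * lp_norm p f].

Definition bounded_below_on (I J : choiceType) (p : R)
    (T : (I -> R) -> (J -> R)) (W : set (I -> R)) :=
  exists c : R, 0 < c /\ forall f, W f -> c * lp_norm p f <= lp_norm p (T f).

Definition lp_subspace (I : choiceType) (p : R) (W : set (I -> R)) :=
  [/\ W `<=` in_lp p, W (fun=> 0) &
      forall f g (a : R), W f -> W g -> W (fun i => a * f i + g i)].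

Definition lp_closed (I : choiceType) (p : R) (W : set (I -> R)) :=
  forall f, in_lp p f ->
    (forall e : R, 0 < e -> exists g, W g /\ lp_norm p (fun i => f i - g i) < e) ->
    W f.

Definition lp_iso_onto (K L : choiceType) (p : R)
    (J : (K -> R) -> (L -> R)) (W : set (L -> R)) :=
  [/\ bounded_op p J, bounded_below_on p J (in_lp p) &
      forall g, W g <-> exists f, in_lp p f /\ J f = g].

Definition closed_span (K L : choiceType) (p : R) (x : K -> L -> R) : set (L -> R) :=
  fun f => in_lp p f /\
    forall e : R, 0 < e -> exists (s : seq K) (c : K -> R),
      lp_norm p (fun i => f i - \sum_(a <- s) c a * x a i) < e.

Definition equiv_unit_basis (K L : choiceType) (p : R) (x : K -> L -> R) :=
  exists J : (K -> R) -> (L -> R),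
    lp_iso_onto p J (closed_span p x) /\ forall a, J (unit_vec a) = x a.

Definition in_S_lp (K L : choiceType) (p : R) (T : (L -> R) -> (L -> R)) :=
  bounded_op p T /\
  ~ exists W : set (L -> R),
      [/\ lp_subspace p W, lp_closed p W,
          (exists J : (K -> R) -> (L -> R), lp_iso_onto p J W) &
          bounded_below_on p T W].

End Lp.

(* Main.v *)
Require Import Defs.
From HB Require Import structures.
From mathcomp Require Import all_boot all_order all_algebra.
From mathcomp Require Import all_classical all_reals all_analysis.
From mathcomp Require Import ring.
Import Order.TTheory GRing.Theory Num.Theory.
Local Open Scope classical_set_scope.
Local Open Scope ring_scope.

Local Close Scope ring_scope.
Lemma inf_seq (T : Type) (B : set T) : infinite_set B ->
  exists h : nat -> T, (forall n, B (h n)) /\ injective h.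
Proof.
move/infiniteP/card_leP => -[f].
exists (fun n => val (f (SigSub (mem_set (I : [set: nat] n))))); split.
  move=> n; exact: set_valP.
move=> n m /val_inj /(@inj _ _ _ f) H.
by have := H (mem_set I) (mem_set I) => /(congr1 val).
Qed.

Lemma nat_pair : exists pr : nat * nat -> nat, injective pr.
Proof.
have /countable_injP[pr prI] : countable [set: nat * nat] by [].
by exists pr => x y /prI; apply; rewrite inE.
Qed.

Section CardLemma.
Variables (T : Type) (A : set T).

Definition goodG (G : set (T * nat * T)) :=
  [/\ (forall a n y, G (a,n,y) -> A a),
      (forall a n y z, G (a,n,y) -> G (a,n,z) -> y = z),
      (forall a n y, G (a,n,y) -> forall m, exists z, G (a,m,z)),
      (forall a n y, G (a,n,y) -> exists m z, G (y,m,z))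
    & (forall a n y b m, G (a,n,y) -> G (b,m,y) -> a = b /\ n = m)].

Lemma goodG_chain : forall F : set (set (T * nat * T)), F `<=` goodG ->
  total_on F subset -> goodG (\bigcup_(X in F) X).
Proof.
move=> F FG Ftot; split.
- by move=> a n y [X FX Xa]; have [] := FG _ FX; move=> h *; exact: h Xa.
- move=> a n y z [X FX Xy] [Y FY Yz].
  have [XY|YX] := Ftot _ _ FX FY.
    by have [_ h _ _ _] := FG _ FY; apply: h (XY _ Xy) Yz.
  by have [_ h _ _ _] := FG _ FX; apply: h Xy (YX _ Yz).
- move=> a n y [X FX Xy] m; have [_ _ h _ _] := FG _ FX.
  by have [z Xz] := h _ _ _ Xy m; exists z, X.
- move=> a n y [X FX Xy]; have [_ _ _ h _] := FG _ FX.
  by have [m [z Xz]] := h _ _ _ Xy; exists m, z, X.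
- move=> a n y b m [X FX Xy] [Y FY Yz].
  have [XY|YX] := Ftot _ _ FX FY.
    by have [_ _ _ _ h] := FG _ FY; apply: h (XY _ Xy) Yz.
  by have [_ _ _ _ h] := FG _ FX; apply: h Xy (YX _ Yz).
Qed.

Lemma inj_prod_nat : infinite_set A ->
  exists f : T -> nat -> T, (forall a n, A a -> A (f a n)) /\
    (forall a n b m, A a -> A b -> f a n = f b m -> a = b /\ n = m).
Proof.
move=> Ainf.
have [G0 [G0good G0max]] := Zorn_bigcup goodG_chain.
have [G1 G2 G3 G4 G5] := G0good.
pose D a := exists n y, G0 (a, n, y).
have [pr prI] := nat_pair.
have finAD : finite_set (A `\` D).
  apply: contrapT => /inf_seq [h [hAD hI]].
  pose G' := G0 `|` [set t | exists i n, t = (h i, n, h (pr (i, n)))].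
  apply: (G0max G').
    split; first by move=> t Gt; left.
    apply/existsNP; exists (h 0%N, 0%N, h (pr (0%N, 0%N))) => /(_ (or_intror _)) H.
    have /H : [set t | exists i n, t = (h i, n, h (pr (i, n)))]
       (h 0%N, 0%N, h (pr (0%N, 0%N))) by exists 0%N, 0%N.
    by move=> Gh; case: (hAD 0%N) => _; apply; do 2 eexists; exact: Gh.
  have hnD i : ~ D (h i) by case: (hAD i).
  have hA i : A (h i) by case: (hAD i).
  have valD a n y : G0 (a,n,y) -> D y by move=> /G4 [m [z ?]]; exists m, z.
  split.
  - move=> a n y [/G1 //|[i [m [-> _ _]]]]; exact: hA.
  - move=> a n y z [Gy|[i [m [-> -> ->]]]] [Gz|[j [k [ea en ez]]]].
    + exact: G2 Gy Gz.
    + by exfalso; apply: (hnD j); rewrite -ea; exists n, y.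
    + by exfalso; apply: (hnD i); exists m, z.
    + by move: ea => /hI ea; rewrite ez -en -ea.
  - move=> a n y [Gy|[i [m [-> _ _]]]] k.
      by have [z Gz] := G3 _ _ _ Gy k; exists z; left.
    by exists (h (pr (i, k))); right; exists i, k.
  - move=> a n y [Gy|[i [m [_ _ ->]]]].
      by have [k [z Gz]] := G4 _ _ _ Gy; exists k, z; left.
    by exists 0%N, (h (pr (pr (i, m), 0%N))); right; exists (pr (i, m)), 0%N.
  - move=> a n y b m [Gy|[i [k [ea en ey]]]] [Gz|[j [l [eb em ez]]]].
    + exact: G5 Gy Gz.
    + by exfalso; apply: (hnD (pr (j, l))); rewrite -ez; apply: valD Gy.
    + by exfalso; apply: (hnD (pr (i, k))); rewrite -ey; apply: valD Gz.
    + move: ey; rewrite ez => /hI /prI [ij kl]; subst.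
      by [].
have DA : D `<=` A by move=> a [n [y /G1]].
have Dinf : infinite_set D.
  move=> finD; apply: Ainf; apply: (sub_finite_set (B := D `|` (A `\` D))).
    by move=> a Aa; case: (pselect (D a)) => Da; [left|right].
  by rewrite finite_setU.
have [d0 Dd0] : exists d, D d.
  by apply/set0P/negP => /eqP D0; apply: Dinf; rewrite D0.
have /countable_injP [fin finI] := finite_set_countable finAD.
have [gf gfP] : exists gf : T -> nat -> T, forall a n, D a -> G0 (a, n, gf a n).
  have H : forall an : T * nat, exists y, D an.1 -> G0 (an.1, an.2, y).
    case=> a n /=; case: (pselect (D a)) => [[m [y Gy]]|nDa].
      by have [z Gz] := G3 _ _ _ Gy n; exists z.
    by exists d0.
  have [g gP] := choice H.
  by exists (fun a n => g (a, n)) => a n Da; exact: (gP (a, n) Da).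
pose e a := if pselect (D a) then (a, 0%N) else (d0, (fin a).+1).
have eD a : D (e a).1 by rewrite /e; case: pselect.
exists (fun a n => gf (e a).1 (pr ((e a).2, n))); split.
  move=> a n _; apply: DA; have [m [z Gz]] := G4 _ _ _ (gfP (e a).1 (pr ((e a).2, n)) (eD a)).
  by exists m, z.
move=> a n b m Aa Ab E.
have Gb := gfP _ (pr ((e b).2, m)) (eD b); rewrite -E in Gb.
have [e1 /prI [e2 nm]] := G5 _ _ _ _ _ (gfP _ _ (eD a)) Gb.
split=> //; move: e1 e2; rewrite /e; case: pselect => Da; case: pselect => Db /= e1 e2.
- by [].
- by case: e2.
- by case: e2.
- case: e2 => /finI; apply; rewrite inE; split => //.
Qed.

End CardLemma.

Lemma indep_inj (K : Type) (adj : K -> K -> Prop) :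
  ~ countable [set: K] -> (forall a b, adj a b -> adj b a) ->
  (forall a, countable [set b | adj a b]) ->
  exists iota : K -> K, injective iota /\
    forall k k', k <> k' -> ~ adj (iota k) (iota k').
Proof.
move=> Kunc adjS adjc.
pose P (B : set K) := forall a b, B a -> B b -> a <> b -> ~ adj a b.
have [A [PA Amax]] : exists A, P A /\ forall B, A `<` B -> ~ P B.
  apply: Zorn_bigcup => F FP Ftot a b [X FX Xa] [Y FY Yb].
  have [XY|YX] := Ftot _ _ FX FY.
    by apply: (FP _ FY); [exact: XY|].
  by apply: (FP _ FX); [|exact: YX].
pose N a := [set b | b = a \/ adj a b].
have cover k : exists a, A a /\ N a k.
  apply: contrapT => nex.
  have nAk : ~ A k by move=> Ak; apply: nex; exists k; split => //; left.
  apply: (Amax (A `|` [set k])).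
    split; first by move=> x Ax; left.
    by move=> /(_ k (or_intror erefl)).
  move=> a b [Aa|->] [Ab|->] ab.
  - exact: PA.
  - by move=> h; apply: nex; exists a; split => //; right.
  - by move=> h; apply: nex; exists b; split => //; right; apply: adjS.
  - by [].
have Nc a : countable (N a).
  rewrite (_ : N a = [set a] `|` [set b | adj a b]); last first.
    by apply/seteqP; split => b [h|h]; [left|right|left|right].
  rewrite -bigcup2inE; apply: bigcup_countable; first exact: finite_set_countable.
  move=> [|[|i]] /= hi; [exact: countable1|exact: adjc|by []].
have Ainf : infinite_set A.
  move=> /finite_set_countable Ac; apply: Kunc.
  apply: (sub_countable (B := \bigcup_(a in A) N a)); last exact: bigcup_countable.
  apply: subset_card_le => k _; have [a [Aa Nak]] := cover k; by exists a.
have [sel selP] := choice cover.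
have [idx idxP] := choice (fun a => (elimT (countable_injP (N a))) (Nc a)).
have [f [fA fI]] := @inj_prod_nat _ A Ainf.
exists (fun k => f (sel k) (idx (sel k) k)); split.
  move=> k k' E.
  have [e1 e2] := fI _ _ _ _ (proj1 (selP k)) (proj1 (selP k')) E.
  apply: (idxP (sel k)); rewrite ?inE; first exact: (proj2 (selP k)).
    by rewrite e1; exact: (proj2 (selP k')).
  by rewrite e2 e1.
move=> k k' kk'; apply: PA; try exact: fA (proj1 (selP _)).
move=> E; apply: kk'.
have [e1 e2] := fI _ _ _ _ (proj1 (selP k)) (proj1 (selP k')) E.
apply: (idxP (sel k)); rewrite ?inE; first exact: (proj2 (selP k)).
  by rewrite e1; exact: (proj2 (selP k')).
by rewrite e2 e1.
Qed.

Local Open Scope ring_scope.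

Set Implicit Arguments. Unset Strict Implicit. Unset Printing Implicit Defensive.

Section Basics.
Variables (R : realType) (p : R).
Hypothesis p1 : 1 < p.

Let p0 : 0 < p. Proof. exact: lt_trans p1. Qed.
Let pneq0 : p != 0. Proof. by rewrite gt_eqF. Qed.

Definition lpS (I : choiceType) (f : I -> R) := fine (lp_sum p f).

Lemma powRK (x : R) : 0 <= x -> (x `^ p) `^ p^-1 = x.
Proof. by move=> x0; rewrite -powRrM mulfV // powRr1. Qed.

Lemma powRKV (x : R) : 0 <= x -> (x `^ p^-1) `^ p = x.
Proof. by move=> x0; rewrite -powRrM mulVf // powRr1. Qed.

Lemma lp_sum_ge0 (I : choiceType) (f : I -> R) : (0 <= lp_sum p f)%E.
Proof. by apply: esum_ge0 => i _; rewrite lee_fin powR_ge0. Qed.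

Lemma S_ge0 (I : choiceType) (f : I -> R) : 0 <= lpS f.
Proof. exact/fine_ge0/lp_sum_ge0. Qed.

Lemma lp_sumE (I : choiceType) (f : I -> R) : in_lp p f -> lp_sum p f = (lpS f)%:E.
Proof.
by move=> fin; rewrite /lpS fineK // ge0_fin_numE ?lp_sum_ge0.
Qed.

Lemma norm_powp (I : choiceType) (f : I -> R) : lp_norm p f `^ p = lpS f.
Proof. by rewrite /lp_norm powRKV // S_ge0. Qed.

Lemma norm_ge0 (I : choiceType) (f : I -> R) : 0 <= lp_norm p f.
Proof. exact: powR_ge0. Qed.

Lemma norm_le (I : choiceType) (f : I -> R) x : 0 <= x ->
  (lp_norm p f <= x) <-> (lpS f <= x `^ p).
Proof.
move=> x0; split => H.
  by rewrite -norm_powp; apply: ge0_ler_powR; rewrite ?nnegrE ?norm_ge0 // ltW.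
rewrite /lp_norm -(powRK x0); apply: ge0_ler_powR => //;
  by rewrite ?nnegrE ?S_ge0 ?powR_ge0 // invr_ge0 ltW.
Qed.

Lemma norm_lt (I : choiceType) (f : I -> R) x : 0 <= x ->
  (lp_norm p f < x) <-> (lpS f < x `^ p).
Proof.
move=> x0; split => H.
  by rewrite -norm_powp; apply: gt0_ltr_powR; rewrite ?nnegrE ?norm_ge0.
rewrite /lp_norm -(powRK x0); apply: gt0_ltr_powR => //;
  by rewrite ?nnegrE ?S_ge0 ?powR_ge0 // invr_gt0.
Qed.

Lemma coord_le_S (I : choiceType) (f : I -> R) i : in_lp p f -> `|f i| `^ p <= lpS f.
Proof.
move=> fin; rewrite -lee_fin -lp_sumE //; apply: esum_ge.
by exists [set i]; [split => //; exact: finite_set1|rewrite fsbig_set1].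
Qed.

Lemma coord_le (I : choiceType) (f : I -> R) i : in_lp p f -> `|f i| <= lp_norm p f.
Proof.
move=> fin; rewrite /lp_norm -(powRK (normr_ge0 (f i))).
apply: ge0_ler_powR; rewrite ?nnegrE ?powR_ge0 ?S_ge0 ?invr_ge0 ?(ltW p0) //.
exact: coord_le_S.
Qed.

Lemma le_norm (I : choiceType) (f : I -> R) x : 0 <= x ->
  (x <= lp_norm p f) <-> (x `^ p <= lpS f).
Proof.
move=> x0; split => H.
  by rewrite -norm_powp; apply: ge0_ler_powR; rewrite ?nnegrE ?norm_ge0 // ltW.
rewrite /lp_norm -(powRK x0); apply: ge0_ler_powR => //;
  by rewrite ?nnegrE ?S_ge0 ?powR_ge0 // invr_ge0 ltW.
Qed.

Lemma esumZ (I : choiceType) (A : set I) (a : I -> \bar R) c : 0 <= c ->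
  (forall i, (0 <= a i)%E) ->
  (\esum_(i in A) (c%:E * a i) = c%:E * \esum_(i in A) a i)%E.
Proof.
move=> c0 a0; rewrite /esum -ereal_supZl //; last first.
  by apply/set0P; exists (\sum_(x \in set0) a x)%E; exists set0 => //; exact: fsets_set0.
congr ereal_sup; apply/seteqP; split.
  move=> _ [X [finX XA] <-].
  exists (\sum_(x \in X) a x)%E; first by exists X.
  by rewrite !fsbig_finite // ge0_sume_distrr.
move=> _ [_ [X [finX XA] <-] <-].
exists X => //.
by rewrite !fsbig_finite // ge0_sume_distrr.
Qed.

Lemma lp_sum_scale (I : choiceType) (f : I -> R) a :
  lp_sum p (fun i => a * f i) = ((`|a| `^ p)%:E * lp_sum p f)%E.
Proof.
rewrite /lp_sum -esumZ; last 2 first.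
- exact: powR_ge0.
- by move=> i; rewrite lee_fin powR_ge0.
by apply: eq_esum => i _; rewrite normrM powRM // -EFinM.
Qed.

Lemma in_lp_scale (I : choiceType) (f : I -> R) a : in_lp p f -> in_lp p (fun i => a * f i).
Proof. by move=> fin; rewrite /in_lp lp_sum_scale lp_sumE // -EFinM ltry. Qed.

Lemma S_scale (I : choiceType) (f : I -> R) a : lpS (fun i => a * f i) = `|a| `^ p * lpS f.
Proof.
rewrite /lpS lp_sum_scale; have := lp_sum_ge0 f.
case: (lp_sum p f) => [r|_|//] /=; first by [].
have := powR_ge0 `|a| p; rewrite le_eqVlt => /predU1P[<-|c0].
  by rewrite mul0e /= mul0r.
by rewrite gt0_muley //= mulr0.
Qed.

Lemma norm_scale (I : choiceType) (f : I -> R) a :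
  lp_norm p (fun i => a * f i) = `|a| * lp_norm p f.
Proof.
change (lpS (fun i => a * f i) `^ p^-1 = `|a| * lpS f `^ p^-1).
by rewrite S_scale powRM ?powR_ge0 ?S_ge0 // powRK.
Qed.

Lemma pt_quasi (x y : R) : `|x + y| `^ p <= 2 `^ p * (`|x| `^ p + `|y| `^ p).
Proof.
pose m := Num.max `|x| `|y|.
have m0 : 0 <= m by rewrite le_max normr_ge0.
have h1 : `|x + y| <= 2 * m.
  rewrite (le_trans (ler_normD _ _)) // mulr2n mulrDl mul1r lerD // ?le_max lexx ?orbT //.
rewrite (@le_trans _ _ ((2 * m) `^ p)) //.
  by apply: ge0_ler_powR; rewrite ?nnegrE ?(ltW p0) ?normr_ge0 ?mulr_ge0.
rewrite powRM // ler_wpM2l ?powR_ge0 //.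
rewrite /m; case: (leP `|x| `|y|) => _.
  by rewrite lerDr powR_ge0.
by rewrite lerDl powR_ge0.
Qed.

Lemma lp_sum_add (I : choiceType) (f g : I -> R) :
  (lp_sum p (fun i => (f i + g i)%R) <= (2 `^ p)%:E * (lp_sum p f + lp_sum p g))%E.
Proof.
rewrite /lp_sum -esumD; last 2 first.
- by move=> i _; rewrite lee_fin powR_ge0.
- by move=> i _; rewrite lee_fin powR_ge0.
rewrite -esumZ; last 2 first.
- exact: powR_ge0.
- by move=> i; rewrite -EFinD lee_fin addr_ge0 ?powR_ge0.
by apply: le_esum => i _; rewrite -EFinD -EFinM lee_fin pt_quasi.
Qed.

Lemma in_lp_lin (I : choiceType) (f g : I -> R) a : in_lp p f -> in_lp p g ->
  in_lp p (fun i => a * f i + g i).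
Proof.
move=> ff fg; rewrite /in_lp (le_lt_trans (lp_sum_add _ _)) //.
by rewrite lp_sumE ?(lp_sumE fg) //; [rewrite -EFinD -EFinM ltry|exact: in_lp_scale].
Qed.

Lemma S_add (I : choiceType) (f g : I -> R) : in_lp p f -> in_lp p g ->
  lpS (fun i => f i + g i) <= 2 `^ p * (lpS f + lpS g).
Proof.
move=> ff fg; have := lp_sum_add f g.
have ffg : in_lp p (fun i => f i + g i).
  by have := in_lp_lin 1 ff fg; under eq_fun do rewrite mul1r.
by rewrite (lp_sumE ffg) (lp_sumE ff) (lp_sumE fg) -EFinD -EFinM lee_fin.
Qed.

Lemma lp_sum0 (I : choiceType) : lp_sum p (fun _ : I => 0) = 0%E.
Proof. by rewrite /lp_sum esum1 // => i _; rewrite normr0 powR0. Qed.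

Lemma in_lp0 (I : choiceType) : in_lp p (fun _ : I => 0).
Proof. by rewrite /in_lp lp_sum0 ltry. Qed.

Lemma norm0 (I : choiceType) : lp_norm p (fun _ : I => 0) = 0.
Proof. by rewrite /lp_norm lp_sum0 /= powR0 // invr_eq0. Qed.

Lemma in_lp_sum (I K : choiceType) (u : K -> I -> R) (s : seq K) (c : K -> R) :
  (forall a, in_lp p (u a)) -> in_lp p (fun i => \sum_(a <- s) c a * u a i).
Proof.
move=> uf; elim: s => [|a s IH].
  by under eq_fun do rewrite big_nil; exact: in_lp0.
by under eq_fun do rewrite big_cons; exact: in_lp_lin.
Qed.

Lemma lp_sum_fin (I : choiceType) (F : set I) (f : I -> R) : finite_set F ->
  (forall i, ~ F i -> f i = 0) ->
  lp_sum p f = (\sum_(i \in F) (`|f i| `^ p)%:E)%E.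
Proof.
move=> finF f0; rewrite /lp_sum (esumID F); last by move=> i _; rewrite lee_fin powR_ge0.
rewrite setTI esum_fset //; try by move=> i _; rewrite lee_fin powR_ge0.
rewrite [X in (_ + X)%E]esum1 ?adde0 // => i [_ /f0 ->].
by rewrite normr0 powR0.
Qed.

Definition vec (I : choiceType) (s : seq I) (c : I -> R) : I -> R :=
  fun i => \sum_(a <- s) c a * unit_vec R a i.

Lemma vecE (I : choiceType) (s : seq I) (c : I -> R) i : uniq s ->
  vec s c i = if i \in s then c i else 0.
Proof.
rewrite /vec; elim: s => [|a s IH] /=; first by rewrite big_nil.
move=> /andP[aNs us]; rewrite big_cons IH // in_cons /unit_vec.
have [->|ia] := eqVneq i a; first by rewrite (negPf aNs) mulr1 addr0.
by rewrite mulr0 add0r.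
Qed.

Lemma lp_sum_vec (I : choiceType) (s : seq I) (c : I -> R) : uniq s ->
  lp_sum p (vec s c) = (\sum_(a <- s) (`|c a| `^ p)%:E)%E.
Proof.
move=> us; rewrite (@lp_sum_fin _ [set` s]); last 2 first.
- exact: finite_seq.
- by move=> i /= nis; rewrite vecE // ifF //; apply/negP.
rewrite -(fsbig_seq _ _ us); apply: eq_big_seq => i iS.
by rewrite vecE // iS.
Qed.

Lemma in_lp_vec (I : choiceType) (s : seq I) (c : I -> R) : uniq s -> in_lp p (vec s c).
Proof. by move=> us; rewrite /in_lp lp_sum_vec // sumEFin ltry. Qed.

Lemma in_lp_unit (I : choiceType) (a : I) : in_lp p (unit_vec R a).
Proof.
have -> : unit_vec R a = vec [:: a] (fun _ => 1).
  by apply/funext => i; rewrite /vec big_seq1 mul1r.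
exact: in_lp_vec.
Qed.

Section Lin.
Variables (I J : choiceType) (T : (I -> R) -> (J -> R)).
Hypothesis Tlin : lp_linear p T.

Lemma lin0 : T (fun _ => 0) = (fun _ => 0).
Proof.
have := Tlin (-1) (@in_lp0 I) (@in_lp0 I).
rewrite (_ : (fun i : I => -1 * 0 + 0) = fun _ => 0); last first.
  by apply/funext => i; rewrite mulr0 addr0.
move=> E; apply/funext => j; have := congr1 (fun h => h j) E => /= ->.
by rewrite mulN1r addNr.
Qed.

Lemma linB (f g : I -> R) : in_lp p f -> in_lp p g ->
  T (fun i => f i - g i) = (fun j => T f j - T g j).
Proof.
move=> ff fg; have := Tlin (-1) fg ff.
rewrite (_ : (fun i : I => -1 * g i + f i) = fun i => f i - g i); last first.
  by apply/funext => i; rewrite mulN1r addrC.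
move=> ->; apply/funext => j; by rewrite mulN1r addrC.
Qed.

Lemma linZ (f : I -> R) a : in_lp p f -> T (fun i => a * f i) = (fun j => a * T f j).
Proof.
move=> ff; have := Tlin a ff (@in_lp0 I).
rewrite (_ : (fun i : I => a * f i + 0) = fun i => a * f i); last first.
  by apply/funext => i; rewrite addr0.
by move=> ->; rewrite lin0; apply/funext => j; rewrite addr0.
Qed.

Lemma lin_sum (K : choiceType) (u : K -> I -> R) (s : seq K) (c : K -> R) :
  (forall a, in_lp p (u a)) ->
  T (fun i => \sum_(a <- s) c a * u a i) = (fun j => \sum_(a <- s) c a * T (u a) j).
Proof.
move=> uf; elim: s => [|a s IH].
  rewrite (_ : (fun i : I => \sum_(a <- [::]) c a * u a i) = fun _ => 0); last first.
    by apply/funext => i; rewrite big_nil.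
  by rewrite lin0; apply/funext => j; rewrite big_nil.
rewrite (_ : (fun i : I => \sum_(b <- a :: s) c b * u b i) =
   (fun i => c a * u a i + \sum_(b <- s) c b * u b i)); last first.
  by apply/funext => i; rewrite big_cons.
rewrite Tlin //; last exact: in_lp_sum.
by rewrite IH; apply/funext => j; rewrite big_cons.
Qed.

End Lin.

Lemma norm_vec_sg (K : choiceType) (s : seq K) (c : K -> R) : uniq s ->
  (forall a, a \in s -> `|c a| = 1) -> lp_norm p (vec s c) = (size s)%:R `^ p^-1.
Proof.
move=> us c1; rewrite /lp_norm lp_sum_vec //.
rewrite (eq_big_seq (fun=> 1%:E)); last by move=> a /c1 ->; rewrite powR1.
rewrite sumEFin /=; congr (_ `^ _).
by elim: (s) => [|a t IH]; rewrite ?big_nil ?big_cons ?IH //= -add1n natrD.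
Qed.

Lemma dual_countable (K : choiceType) (psi : (K -> R) -> R) (M : R) :
  (forall f g a, in_lp p f -> in_lp p g -> psi (fun i => a * f i + g i) = a * psi f + psi g) ->
  (forall f, in_lp p f -> `|psi f| <= M * lp_norm p f) ->
  countable [set a | psi (unit_vec R a) != 0].
Proof.
move=> plin pb.
pose T' (f : K -> R) : unit -> R := fun _ => psi f.
have Tlin2 : lp_linear p T' by move=> f g a ff fg; apply/funext => u; exact: plin.
pose A (n : nat) := [set a | n.+1%:R^-1 < `|psi (unit_vec R a)|].
have sub : [set a | psi (unit_vec R a) != 0] `<=` \bigcup_(n in [set: nat]) A n.
  move=> a /= pa; exists (Num.truncn `|psi (unit_vec R a)|^-1); first by [].
  rewrite /A /= -[X in _ < X]invrK ltf_pV2 ?posrE ?invr_gt0 ?normr_gt0 //.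
  exact: truncnS_gt.
apply: (sub_countable (subset_card_le sub)); apply: bigcup_countable => // n _.
apply: finite_set_countable; apply: contrapT => /infinite_set_fsetP Ainf.
pose q := 1 - p^-1.
have q0 : 0 < q by rewrite subr_gt0 invf_lt1.
pose X := Num.max ((n.+1%:R * M) + 1) 1.
have X0 : 0 < X by rewrite lt_max ltr01 orbT.
pose N := (Num.truncn (X `^ q^-1)).+1.
have [B BA BN] := Ainf N.
pose s := finmap.enum_fset B.
have us : uniq s := finmap.fset_uniq B.
pose c a := Num.sg (psi (unit_vec R a)).
have psi_nz a : a \in s -> psi (unit_vec R a) != 0.
  move=> /BA /= h; rewrite -normr_gt0 (lt_trans _ h) // invr_gt0 ltr0n.
have c1 a : a \in s -> `|c a| = 1 by move=> /psi_nz h; rewrite normr_sg h.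
have nf := norm_vec_sg us c1.
have psif : psi (vec s c) = \sum_(a <- s) `|psi (unit_vec R a)|.
  have := congr1 (fun h => h tt) (lin_sum Tlin2 s c (@in_lp_unit K)).
  rewrite /T' /= => ->; apply: eq_big_seq => a _; by rewrite normrEsg.
have m1 : (1 <= size s)%N by rewrite (leq_trans _ BN).
set m := (size s)%:R : R.
have m0 : 0 < m by rewrite ltr0n.
have lb : m * n.+1%:R^-1 <= psi (vec s c).
  have -> : m * n.+1%:R^-1 = \sum_(a <- s) n.+1%:R^-1.
    rewrite /m; elim: (s) => [|a t IH]; rewrite ?big_nil ?mul0r // big_cons -IH.
    by rewrite /= -add1n natrD mulrDl mul1r.
  rewrite psif big_seq [X in _ <= X]big_seq; apply: ler_sum => a /BA /= h.
  exact: ltW.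
have ub : psi (vec s c) <= M * m `^ p^-1.
  by rewrite -nf (le_trans (ler_norm _)) // (pb _ (in_lp_vec c us)).
have mpos : 0 < m `^ p^-1 by rewrite powR_gt0.
have msplit : m = m `^ p^-1 * m `^ q.
  rewrite -powRD; last by apply/implyP => _; rewrite gt_eqF.
  by rewrite /q addrCA subrr addr0 powRr1 // ltW.
have h1 : m `^ q <= n.+1%:R * M.
  have H := le_trans lb ub.
  rewrite {1}msplit -mulrA (mulrC M) ler_pM2l // in H.
  by rewrite mulrC -ler_pdivrMr ?ltr0n.
have h2 : N%:R `^ q <= m `^ q.
  by apply: ge0_ler_powR; rewrite ?nnegrE ?(ltW q0) ?ler0n ?ler_nat.
have h3 : X < N%:R `^ q.
  have -> : X = (X `^ q^-1) `^ q by rewrite -powRrM mulVf ?gt_eqF // powRr1 // ltW.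
  apply: gt0_ltr_powR => //; rewrite ?nnegrE ?powR_ge0 ?ler0n //.
  exact: truncnS_gt.
have : X <= n.+1%:R * M by rewrite (le_trans (ltW h3)) // (le_trans h2).
rewrite /X ge_max => /andP[] H _; move: H; rewrite gerDl.
by rewrite ler10.
Qed.

Lemma supp_countable (I : choiceType) (f : I -> R) : in_lp p f ->
  countable [set i | f i != 0].
Proof.
move=> ff.
pose A (n : nat) := [set i | n.+1%:R^-1 < `|f i|].
have sub : [set i | f i != 0] `<=` \bigcup_(n in [set: nat]) A n.
  move=> i /= fi; exists (Num.truncn `|f i|^-1); first by [].
  rewrite /A /= -[X in _ < X]invrK ltf_pV2 ?posrE ?invr_gt0 ?normr_gt0 //.
  exact: truncnS_gt.
apply: (sub_countable (subset_card_le sub)); apply: bigcup_countable => // n _.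
apply: finite_set_countable; apply: contrapT => /infinite_set_fsetP Ainf.
pose k := n.+1%:R^-1 `^ p.
have k0 : 0 < k by rewrite powR_gt0 // invr_gt0 ltr0n.
pose N := (Num.truncn (lpS f / k)).+1.
have [B BA BN] := Ainf N.
pose s := finmap.enum_fset B.
have us : uniq s := finmap.fset_uniq B.
have H1 : (\sum_(i <- s) (`|f i| `^ p)%:E <= lp_sum p f)%E.
  apply: esum_ge; exists [set` s]; first by split => //; exact: finite_seq.
  by rewrite -(fsbig_seq _ _ us).
have H2 : (size s)%:R * k <= \sum_(i <- s) `|f i| `^ p.
  have -> : (size s)%:R * k = \sum_(i <- s) k.
    elim: (s) => [|a t IH]; rewrite ?big_nil ?mul0r // big_cons -IH.
    by rewrite /= -add1n natrD mulrDl mul1r.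
  rewrite big_seq [X in _ <= X]big_seq; apply: ler_sum => i /BA /= h.
  apply: ge0_ler_powR; rewrite ?nnegrE ?normr_ge0 ?invr_ge0 ?ler0n ?(ltW p0) //.
  exact: ltW.
rewrite sumEFin (lp_sumE ff) lee_fin in H1.
have H3 : lpS f < N%:R * k.
  by rewrite -ltr_pdivrMr // truncnS_gt.
have H4 : N%:R * k <= (size s)%:R * k by rewrite ler_pM2r // ler_nat.
by have := lt_le_trans H3 (le_trans H4 (le_trans H2 H1)); rewrite ltxx.
Qed.

Lemma trunc_approx (I : choiceType) (g : I -> R) e : in_lp p g -> 0 < e ->
  exists s : seq I, uniq s /\ lpS (fun i => g i - vec s g i) < e.
Proof.
move=> fg e0.
have : ((lpS g - e)%:E < lp_sum p g)%E by rewrite (lp_sumE fg) lte_fin ltrBlDr ltrDl.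
move=> /ereal_sup_gt [_ [X [finX _] <-] lt1].
pose s := finmap.enum_fset (fset_set X).
have us : uniq s by exact: finmap.fset_uniq.
exists s; split => //.
pose h := fun i => g i - vec s g i.
have hE i : h i = if i \in s then 0 else g i.
  by rewrite /h vecE //; case: ifP => _; rewrite ?subrr ?subr0.
have pos (u : I -> R) i : [set: I] i -> (0 <= (`|u i| `^ p)%:E)%E.
  by move=> _; rewrite lee_fin powR_ge0.
have Eg := esumID [set` s] _ _ (pos g).
have Eh := esumID [set` s] _ _ (pos h).
rewrite -/(lp_sum p g) in Eg; rewrite -/(lp_sum p h) in Eh.
rewrite [X in (_ = X + _)%E]esum1 ?add0e in Eh; last first.
  by move=> i [_ /= iS]; rewrite hE ifT // normr0 powR0.
rewrite (eq_esum (b := fun i => (`|g i| `^ p)%:E)) in Eh; last first.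
  by move=> i [_ /= iS]; rewrite hE ifF //; apply/negP.
rewrite setTI esum_fset in Eg; last 2 first.
- exact: finite_seq.
- by move=> i _; rewrite lee_fin powR_ge0.
rewrite -(fsbig_seq _ _ us) in Eg.
rewrite fsbig_finite // -/s in lt1.
rewrite sumEFin in lt1 Eg.
rewrite (lp_sumE fg) in Eg.
have hf : in_lp p h.
  rewrite /in_lp Eh.
  move: Eg; case: (esum _ _) => // r _; exact: ltry.
rewrite (lp_sumE hf) in Eh.
rewrite -Eh in Eg.
rewrite -EFinD in Eg; move: lt1; rewrite lte_fin.
have Eg2 := EFin_inj Eg.
by rewrite -/h Eg2 ltrBlDr ltrD2l.
Qed.

Lemma esum_sub_le (I : choiceType) (A B : set I) (h : I -> \bar R) :
  A `<=` B -> (forall i, (0 <= h i)%E) -> (esum A h <= esum B h)%E.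
Proof.
move=> AB h0; rewrite esum_mkcond [X in (_ <= X)%E]esum_mkcond.
apply: le_esum => i _; case: ifPn => iA; first by rewrite ifT // inE; apply: AB; rewrite -inE.
by case: ifP.
Qed.

Lemma zero_of_small (x D : R) : 0 <= D -> (forall e, 0 < e -> `|x| <= e * D) -> x = 0.
Proof.
move=> D0 H; apply/eqP; apply: contraT => x0.
have ax : 0 < `|x| by rewrite normr_gt0.
have := H (`|x| / (D + 1)) (divr_gt0 ax (ltr_wpDl D0 ltr01)).
rewrite mulrAC ler_pdivlMr ?(ltr_wpDl D0 ltr01) // ler_pM2l //.
by rewrite gerDl ler10.
Qed.

Section Lower.
Variables (K L : choiceType) (Phi : (K -> R) -> (L -> R)) (y : K -> L -> R) (M c : R).
Hypotheses (Philin : lp_linear p Phi) (Philp : forall f, in_lp p f -> in_lp p (Phi f))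
  (M0 : 0 <= M) (Phib : forall f, in_lp p f -> lp_norm p (Phi f) <= M * lp_norm p f)
  (Phie : forall k, Phi (unit_vec R k) = y k) (c0 : 0 < c)
  (yc : forall k, c <= lp_norm p (y k))
  (ydisj : forall k k' g, k <> k' -> y k g = 0 \/ y k' g = 0).

Lemma Phi_coord g k gm : in_lp p g -> y k gm != 0 -> Phi g gm = g k * y k gm.
Proof.
move=> fg yk; apply/eqP; rewrite -subr_eq0; apply/eqP.
apply: (@zero_of_small _ (M + `|y k gm|)); first by rewrite addr_ge0.
move=> e e0.
have [s [us hs]] := trunc_approx fg (powR_gt0 p e0).
have hn : lp_norm p (fun i => g i - vec s g i) < e.
  by apply/(norm_lt _ (ltW e0)).
have fvs : in_lp p (vec s g) by exact: in_lp_vec.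
have Pvs : Phi (vec s g) gm = \sum_(a <- s) g a * y a gm.
  have := congr1 (fun h => h gm) (lin_sum Philin s g (@in_lp_unit K)).
  rewrite /= => E; rewrite /vec E; apply: eq_bigr => a _; by rewrite Phie.
have sumE : \sum_(a <- s) g a * y a gm = if k \in s then g k * y k gm else 0.
  elim: (s) us => [|a t IH] /=; first by rewrite big_nil.
  move=> /andP[aNt ut]; rewrite big_cons IH // in_cons.
  have [<-|ak] := eqVneq a k; first by rewrite (negPf aNt) /= addr0.
  have [|->] := ydisj gm (nesym (elimN eqP ak)); first by move=> /eqP; rewrite (negPf yk).
  by rewrite mulr0 add0r.
have dif : Phi g gm - Phi (vec s g) gm = Phi (fun i => g i - vec s g i) gm.
  by rewrite (linB Philin fg fvs).
have fd : in_lp p (fun i => g i - vec s g i).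
  by have := in_lp_lin (-1) fvs fg; under eq_fun do rewrite mulN1r addrC.
have b1 : `|Phi g gm - Phi (vec s g) gm| <= M * e.
  rewrite dif; apply: (le_trans (coord_le _ (Philp fd))).
  by rewrite (le_trans (Phib fd)) // ler_wpM2l // ltW.
rewrite Pvs sumE in b1.
case: ifP b1 => ks b1.
  by rewrite (le_trans b1) // mulrC ler_wpM2l ?(ltW e0) // lerDl normr_ge0.
have gk : `|g k| <= e.
  have := coord_le k fd; rewrite vecE // ks subr0 => h; exact: (le_trans h (ltW hn)).
rewrite subr0 in b1.
rewrite (le_trans (ler_normB _ _)) // mulrDr lerD // ?(mulrC e) // normrM.
by rewrite [X in X <= _]mulrC; exact: (ler_wpM2l (normr_ge0 _) gk).
Qed.

Lemma Phi_lower g : in_lp p g -> c * lp_norm p g <= lp_norm p (Phi g).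
Proof.
move=> fg.
pose E k := [set gm | y k gm != 0].
pose h gm := (`|Phi g gm| `^ p)%:E.
have h0 gm : (0 <= h gm)%E by rewrite lee_fin powR_ge0.
have yk_lp k : in_lp p (y k) by rewrite -Phie; apply: Philp; exact: in_lp_unit.
have Sy k : c `^ p <= lpS (y k) := (le_norm _ (ltW c0)).1 (yc k).
have step1 k : ((c `^ p * `|g k| `^ p)%:E <= esum (E k) h)%E.
  have -> : esum (E k) h = ((`|g k| `^ p)%:E * lp_sum p (y k))%E.
    rewrite /lp_sum [X in (_ = _ * X)%E](esumID (E k)); last by move=> *; rewrite lee_fin powR_ge0.
    rewrite setTI [X in (_ + X)%E]esum1 ?adde0; last first.
      by move=> gm [_ /= /negP/negPn/eqP ->]; rewrite normr0 powR0.
    rewrite -esumZ ?powR_ge0 //; try by move=> *; rewrite lee_fin powR_ge0.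
    apply: eq_esum => gm /= ygm.
    by rewrite /h (Phi_coord (k:=k)) // normrM powRM // EFinM.
  rewrite lp_sumE // -EFinM lee_fin mulrC; apply: ler_wpM2l => //; exact: powR_ge0.
have step2 s : uniq s -> (\sum_(k <- s) (c `^ p * `|g k| `^ p)%:E <= lp_sum p (Phi g))%E.
  move=> us.
  apply: (@le_trans _ _ (\sum_(k <- s) esum (E k) h)%E).
    by apply: lee_sum => k _; exact: step1.
  rewrite (fsbig_seq _ _ us) -esum_fset; last 2 first.
  - exact: finite_seq.
  - by move=> k _; apply: esum_ge0.
  rewrite (@esum_esum _ _ _ [set` s] E (fun _ gm => h gm)) //.
  rewrite -(esum_image _ snd h); last first.
    move=> [k gm] [k' gm']; rewrite !inE /= => -[_ yg] [_ yg'] /= eg.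
    rewrite -eg in yg'.
    have [kk'|kk'] := pselect (k = k'); first by rewrite kk' eg.
    by case: (ydisj gm kk') => /eqP; rewrite ?(negPf yg) ?(negPf yg').
  by apply: esum_sub_le.
have step3 : ((c `^ p)%:E * lp_sum p g <= lp_sum p (Phi g))%E.
  rewrite {1}/lp_sum -esumZ ?powR_ge0 //; try by move=> *; rewrite lee_fin powR_ge0.
  apply: ge_ereal_sup => _ [X [finX _] <-].
  rewrite fsbig_finite //; under eq_bigr do rewrite -EFinM.
  by apply: step2; exact: finmap.fset_uniq.
rewrite (lp_sumE fg) (lp_sumE (Philp fg)) -EFinM lee_fin in step3.
have hx : 0 <= c * lp_norm p g by rewrite mulr_ge0 ?(ltW c0) ?norm_ge0.
apply/(le_norm (Phi g) hx).
by rewrite powRM ?(ltW c0) ?norm_ge0 // norm_powp.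
Qed.

End Lower.

End Basics.

Unset Implicit Arguments.

Theorem mainTheorem6 (R : realType) (K L : choiceType) (p : R)
    (x : K -> L -> R) (T : (L -> R) -> (L -> R)) :
  ~ countable [set: K] -> ~ countable [set: L] ->
  ([set: K] #<= [set: L])%card ->
  1 < p ->
  (forall a, in_lp p (x a) /\ lp_norm p (x a) = 1) ->
  equiv_unit_basis p x ->
  bounded_op p T ->
  (exists c : R, 0 < c /\ forall a, c <= lp_norm p (T (x a))) ->
  ~ in_S_lp K p T.
Proof.
move=> Kunc Lunc _ p1 xn [J [[Jb Jbb Jr] Jx]] Tb [c [c0 cb]] [_ HS]; apply: HS.
case: Tb => Tlin Tlp [CT [CT0 CTb]].
case: Jb => Jlin Jlp [CJ [CJ0 CJb]].
case: Jbb => cJ [cJ0 cJb].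
pose y a := T (x a).
have ylp a : in_lp p (y a) by apply: Tlp; exact: (xn a).1.
have colc gm : countable [set a | y a gm != 0].
  have -> : [set a | y a gm != 0] = [set a | T (J (unit_vec R a)) gm != 0].
    by apply/funext => a /=; rewrite Jx.
  apply: (@dual_countable R p p1 K (fun f => T (J f) gm) (CT * CJ)).
    by move=> f g a ff fg /=; rewrite (Jlin _ _ _ ff fg) (Tlin _ _ _ (Jlp _ ff) (Jlp _ fg)).
  move=> f ff /=; rewrite (le_trans (coord_le p1 _ (Tlp _ (Jlp _ ff)))) //.
  by rewrite (le_trans (CTb _ (Jlp _ ff))) // -mulrA ler_wpM2l // CJb.
pose adj a b := exists gm, y a gm != 0 /\ y b gm != 0.
have adjS a b : adj a b -> adj b a by move=> [gm [h1 h2]]; exists gm.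
have adjc a : countable [set b | adj a b].
  have -> : [set b | adj a b] = \bigcup_(gm in [set gm | y a gm != 0]) [set b | y b gm != 0].
    by apply/seteqP; split => b /= [gm]; [move=> [h1 h2]|move=> h1 h2]; exists gm.
  apply: bigcup_countable; first exact: (supp_countable p1).
  by move=> gm _; exact: colc.
have [iota [iotaI iotaD]] := @indep_inj K adj Kunc adjS adjc.
have ydisj k k' gm : k <> k' -> y (iota k) gm = 0 \/ y (iota k') gm = 0.
  move=> kk'; have [h1|h1] := eqVneq (y (iota k) gm) 0; first by left.
  have [h2|h2] := eqVneq (y (iota k') gm) 0; first by right.
  by exfalso; apply: (iotaD _ _ kk'); exists gm.
pose ext (g : K -> R) : K -> R := fun a =>
  if pselect (exists k, iota k = a) is left h then g (sval (cid h)) else 0.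
have extI g k : ext g (iota k) = g k.
  rewrite /ext; case: pselect => [h|nh]; last by exfalso; apply: nh; exists k.
  by case: cid => k' /= /iotaI ->.
have extO g a : ~ (exists k, iota k = a) -> ext g a = 0.
  by move=> na; rewrite /ext; case: pselect.
have extL g1 g2 a : ext (fun i => a * g1 i + g2 i) = (fun j => a * ext g1 j + ext g2 j).
  apply/funext => j; have [[k <-]|nj] := pselect (exists k, iota k = j).
    by rewrite !extI.
  by rewrite !extO // mulr0 addr0.
have ext0 : ext (fun _ => 0) = (fun _ => 0).
  apply/funext => j; have [[k <-]|nj] := pselect (exists k, iota k = j).
    by rewrite !extI.
  by rewrite !extO.
have extU k : ext (unit_vec R k) = unit_vec R (iota k).
  apply/funext => j; have [[k' <-]|nj] := pselect (exists k, iota k = j).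
    by rewrite extI /unit_vec (inj_eq iotaI).
  rewrite extO // /unit_vec; case: eqP => // ejk; exfalso; apply: nj; by exists k.
have sum_ext g : lp_sum p (ext g) = lp_sum p g.
  rewrite /lp_sum (esumID (range iota)); last by move=> *; rewrite lee_fin powR_ge0.
  rewrite setTI [X in (_ + X)%E]esum1 ?adde0; last first.
    move=> a [_ na]; rewrite extO; last first.
      by move=> [k ek]; apply: na; exists k.
    by rewrite normr0 powR0 // gt_eqF // (lt_trans ltr01 p1).
  rewrite esum_image; last by move=> k k' _ _; exact: iotaI.
  by apply: eq_esum => k _; rewrite extI.
have ext_lp g : in_lp p g -> in_lp p (ext g) by rewrite /in_lp sum_ext.
have norm_ext g : lp_norm p (ext g) = lp_norm p g by rewrite /lp_norm sum_ext.
pose W h := exists g, in_lp p g /\ J (ext g) = h.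
exists W; split.
- split.
  + by move=> h [g [fg <-]]; apply: Jlp; exact: ext_lp.
  + exists (fun _ => 0); split; first exact: (in_lp0 p1).
    by rewrite ext0; exact: (lin0 p1 Jlin).
  + move=> f1 f2 a [g1 [fg1 <-]] [g2 [fg2 <-]].
    exists (fun i => a * g1 i + g2 i); split; first exact: (in_lp_lin p1).
    by rewrite extL Jlin //; exact: ext_lp.
- move=> f ff happ.
  have p0 : 0 < p by rewrite (lt_trans ltr01 p1).
  have twop0 : 0 < 2 `^ p by rewrite powR_gt0.
  have subl (I : choiceType) (f1 f2 : I -> R) : in_lp p f1 -> in_lp p f2 -> in_lp p (fun i => f1 i - f2 i).
    move=> h1 h2; have := in_lp_lin p1 (-1) h2 h1.
    by rewrite (_ : (fun i => -1 * f2 i + f1 i) = (fun i => f1 i - f2 i)) //; apply/funext => i; rewrite mulN1r addrC.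
  have Jspan : closed_span p x f.
    split => // e e0.
    pose X := e `^ p / (2 * 2 `^ p).
    have X0 : 0 < X by rewrite divr_gt0 ?powR_gt0 // mulr_gt0.
    pose d := X `^ p^-1.
    have dd : d `^ p = X by rewrite /d -powRrM mulVf ?gt_eqF // powRr1 // ltW.
    have d0 : 0 < d by rewrite powR_gt0.
    have [w [[g [fg ew]] hw]] := happ d d0.
    have : closed_span p x w by apply/Jr; exists (ext g); split; [exact: ext_lp|].
    case=> wlp /(_ d d0) [s [cc hs]].
    exists s, cc.
    set v := fun i => \sum_(a <- s) cc a * x a i.
    have vlp : in_lp p v by apply: (in_lp_sum p1) => a; exact: (xn a).1.
    apply/(norm_lt p1 _ (ltW e0)).
    rewrite (_ : (fun i => f i - v i) = (fun i => (f i - w i) + (w i - v i))); last first.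
      by apply/funext => i; rewrite addrA subrK.
    have l1 := subl _ _ _ ff wlp.
    have l2 := subl _ _ _ wlp vlp.
    apply: (le_lt_trans (S_add p1 l1 l2)).
    have s1 := (norm_lt p1 _ (ltW d0)).1 hw.
    have s2 := (norm_lt p1 _ (ltW d0)).1 hs.
    apply: (@lt_le_trans _ _ (2 `^ p * (d `^ p + d `^ p))).
      by rewrite ltr_pM2l // ltrD.
    suff -> : 2 `^ p * (d `^ p + d `^ p) = e `^ p by [].
    rewrite dd /X; field.
    by rewrite gt_eqF.
  have [u [ulp Ju]] := (Jr f).1 Jspan.
  have usupp a : ~ (exists k, iota k = a) -> u a = 0.
    move=> na; apply/eqP; apply: contraT => ua.
    have eps0 : 0 < cJ * `|u a| / 2 by rewrite divr_gt0 // mulr_gt0 // normr_gt0.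
    have [w [[g [fg ew]] hw]] := happ _ eps0.
    have dl := subl _ _ _ ulp (ext_lp _ fg).
    rewrite -ew -Ju -(linB Jlin ulp (ext_lp _ fg)) in hw.
    have h1 := cJb _ dl.
    have := coord_le p1 a dl; rewrite extO // subr0 => h2.
    have h3 : cJ * `|u a| <= cJ * `|u a| / 2.
      apply: ltW; apply: (le_lt_trans _ hw); apply: (le_trans _ h1).
      by apply: ler_wpM2l => //; exact: ltW.
    have z0 : 0 < cJ * `|u a| by rewrite mulr_gt0 // normr_gt0.
    move: h3; rewrite ler_pdivlMr // -{2}[cJ * `|u a|]mulr1 ler_pM2l //.
    by rewrite leNgt ltr1n.
  exists (fun k => u (iota k)).
  have eu : ext (fun k => u (iota k)) = u.
    apply/funext => a; have [[k <-]|na] := pselect (exists k, iota k = a).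
      by rewrite extI.
    by rewrite extO // usupp.
  split; last by rewrite eu.
  by rewrite /in_lp -sum_ext eu.
- exists (fun g => J (ext g)); split.
  + split.
    * by move=> f g a ff fg; rewrite extL Jlin //; exact: ext_lp.
    * by move=> f ff; apply: Jlp; exact: ext_lp.
    * exists CJ; split; first exact: CJ0.
      move=> f ff; rewrite -(norm_ext f); exact: CJb (ext_lp _ ff).
  + exists cJ; split; first exact: cJ0.
    move=> f ff; rewrite -(norm_ext f); exact: cJb (ext_lp _ ff).
  + by move=> g; split => -[f [ff e]]; exists f.
- have H1 : lp_linear p (fun g => T (J (ext g))).
    move=> f g a ff fg /=; rewrite extL (Jlin _ _ _ (ext_lp _ ff) (ext_lp _ fg)).
    by rewrite Tlin //; apply: Jlp; exact: ext_lp.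
  have H2 f : in_lp p f -> in_lp p (T (J (ext f))).
    by move=> ff; apply: Tlp; apply: Jlp; exact: ext_lp.
  have H3 : 0 <= CT * CJ by rewrite mulr_ge0.
  have H4 f : in_lp p f -> lp_norm p (T (J (ext f))) <= CT * CJ * lp_norm p f.
    move=> ff; rewrite (le_trans (CTb _ (Jlp _ (ext_lp _ ff)))) // -mulrA.
    by apply: ler_wpM2l => //; rewrite -(norm_ext f); exact: CJb (ext_lp _ ff).
  have H5 k : T (J (ext (unit_vec R k))) = y (iota k) by rewrite extU Jx.
  have H7 k : c <= lp_norm p (y (iota k)) by exact: cb.
  have PL := @Phi_lower R p p1 K L (fun g => T (J (ext g))) (fun k => y (iota k))
    (CT * CJ) c H1 H2 H3 H4 H5 c0 H7 ydisj.
  have CJ1 : 0 < CJ + 1 by rewrite ltr_wpDl.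
  exists (c / (CJ + 1)); split; first by rewrite divr_gt0.
  move=> h [g [fg <-]].
  apply: (le_trans _ (PL g fg)).
  rewrite -mulrA; apply: ler_wpM2l; first exact: ltW.
  rewrite mulrC ler_pdivrMr // (le_trans (CJb _ (ext_lp _ fg))) //.
  rewrite (norm_ext g) [X in _ <= X]mulrC.
  by apply: ler_wpM2r; [exact: norm_ge0|rewrite lerDl].
Qed.
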